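(* Let $B$ be a unital $C^*$-algebra with a $*$-isomorphism $\psi:B\to M_n\otimes B$ satisfying $\psi(1)=I_n\otimes1$, let $m\ge1$, and suppose that $A$ is a maximal abelian $*$-subalgebra of $B$ with $\sigma_m(A)\subset A$. Then $\chi_{mij}(A)\subset A$ for all $1\le i,j\le n$.
   Context: $M_n=M_n(\mathbb{C})$, matrix units $E_{kl}$, identity $I_n$. Define $\psi_0=\mathrm{id}_B$, $\psi_{m+1}=(\mathrm{id}^{\otimes m}\otimes\psi)\circ\psi_m:B\to M_n^{\otimes(m+1)}\otimes B$. With $f(b)=I_n\otimes b$, for $m\ge1$ let $\sigma_m=\psi_m^{-1}\circ(\mathrm{id}^{\otimes(m-1)}\otimes f)\circ\psi_{m-1}:B\to B$. Let $e_{ij}:M_n\to\mathbb{C}$ be the linear functional $e_{ij}(E_{kl})=\delta_{ik}\delta_{jl}$, and for $m\ge1$ let $\chi_{mij}=\psi_{m-1}^{-1}\circ(\mathrm{id}^{\otimes(m-1)}\otimes e_{ij}\otimes\mathrm{id}_B)\circ\psi_m:B\to B$ (slice map on the $m$-th tensor factor). *)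

(* Defs.v *)
From HB Require Import structures.
From mathcomp Require Import all_boot all_algebra.
From mathcomp Require Import complex reals.
Set Implicit Arguments. Unset Strict Implicit. Unset Printing Implicit Defensive.
Import GRing.Theory Num.Theory.
Local Open Scope ring_scope.

Section Defs.
Variable R : realType.
Local Notation C := (R[i]).

Definition is_involution (B : algType C) (star : B -> B) : Prop :=
  [/\ (forall x, star (star x) = x),
      (forall x y, star (x + y) = star x + star y),
      (forall (a : C) x, star (a *: x) = (a^*)%C *: star x)
    & (forall x y, star (x * y) = star y * star x)].

Definition is_Cstar_norm (B : algType C) (star : B -> B) (nrm : B -> R) : Prop :=
  [/\ (forall x, 0 <= nrm x /\ (nrm x = 0 -> x = 0)),
      (forall x y, nrm (x + y) <= nrm x + nrm y),
      (forall (a : C) x, nrm (a *: x) = ComplexField.Normc.normc a * nrm x),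
      (forall x y, nrm (x * y) <= nrm x * nrm y)
    & (forall x, nrm (star x * x) = nrm x ^+ 2)].

Definition is_complete_norm (B : algType C) (nrm : B -> R) : Prop :=
  forall u : nat -> B,
    (forall e : R, 0 < e -> exists N, forall p q, (N <= p)%N -> (N <= q)%N ->
         nrm (u p - u q) < e) ->
    exists l, forall e : R, 0 < e -> exists N, forall p, (N <= p)%N ->
         nrm (u p - l) < e.

Definition is_unital_Cstar (B : algType C) (star : B -> B) (nrm : B -> R) : Prop :=
  [/\ is_involution star, is_Cstar_norm star nrm & is_complete_norm nrm].

Variable B : algType C.
Variable star : B -> B.
Variable n : nat.

(** M_n (x) B is identified with n x n matrices over B; its adjoint is the
    conjugate transpose with entrywise [star]. *)
Definition mx_star (X : 'M[B]_n) : 'M[B]_n := \matrix_(i, j) star (X j i).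

Definition is_star_iso_unital (psi : B -> 'M[B]_n) : Prop :=
  [/\ (forall x y, psi (x + y) = psi x + psi y) /\
         (forall (a : C) x, psi (a *: x) = map_mx (fun y : B => a *: y) (psi x)),
      (forall x y, psi (x * y) = psi x *m psi y),
      (forall x, psi (star x) = mx_star (psi x)),
      bijective psi
    & psi 1 = 1%:M].

(** Elements of M_n^{(x) k} (x) B: the element
      sum_{r,c} E_{r_k c_k} (x) ... (x) E_{r_1 c_1} (x) X r c
    is encoded by its coefficient function X : k-tuples -> k-tuples -> B.
    The HEAD of the index tuples is the LAST (k-th) tensor factor M_n,
    i.e. the one adjacent to B. *)
Definition tens (k : nat) := k.-tuple 'I_n -> k.-tuple 'I_n -> B.

Variable psi : B -> 'M[B]_n.

Local Unset Implicit Arguments.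
(** psi_0 = id_B, psi_{m+1} = (id^{(x) m} (x) psi) o psi_m. *)
Fixpoint psi_it (m : nat) : B -> tens m :=
  match m return B -> tens m with
  | 0 => fun b _ _ => b
  | S k => fun b r c =>
      psi (psi_it k b (behead_tuple r) (behead_tuple c)) (thead r) (thead c)
  end.
Local Set Implicit Arguments.

(** id^{(x) k} (x) f with f(b) = I_n (x) b : M_n^{(x) k}(x)B -> M_n^{(x) k+1}(x)B *)
Definition lift_f (k : nat) (X : tens k) : tens k.+1 :=
  fun r c => if thead r == thead c then X (behead_tuple r) (behead_tuple c) else 0.

(** id^{(x) k} (x) e_ij (x) id_B : slice map on the (k+1)-th factor. *)
Definition slice (i j : 'I_n) (k : nat) (Y : tens k.+1) : tens k :=
  fun r c => Y [tuple of i :: r] [tuple of j :: c].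

(** Image of a set under sigma_m = psi_m^{-1} o (id^{(x)(m-1)} (x) f) o psi_{m-1}
    (for m >= 1), written as the preimage under psi_m of the image. *)
Definition sigma_image (m : nat) (A : B -> Prop) : B -> Prop :=
  match m with
  | 0 => A
  | S k => fun b => exists2 a, A a & psi_it k.+1 b = lift_f (psi_it k a)
  end.

(** Image of a set under chi_{mij} = psi_{m-1}^{-1} o (id (x) e_ij (x) id) o psi_m. *)
Definition chi_image (m : nat) (i j : 'I_n) (A : B -> Prop) : B -> Prop :=
  match m with
  | 0 => A
  | S k => fun b => exists2 a, A a & psi_it k b = slice i j (psi_it k.+1 a)
  end.

Definition is_star_subalg (A : B -> Prop) : Prop :=
  [/\ A 0,
      (forall x y, A x -> A y -> A (x + y)),
      (forall (a : C) x, A x -> A (a *: x)),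
      (forall x y, A x -> A y -> A (x * y))
    & (forall x, A x -> A (star x))].

Definition is_abelian (A : B -> Prop) : Prop :=
  forall x y, A x -> A y -> x * y = y * x.

Definition is_masa (A : B -> Prop) : Prop :=
  [/\ is_star_subalg A, is_abelian A &
      forall A' : B -> Prop, is_star_subalg A' -> is_abelian A' ->
        (forall x, A x -> A' x) -> forall x, A' x -> A x].

End Defs.

(* Main.v *)
Require Import Defs.
From HB Require Import structures.
From mathcomp Require Import all_boot all_algebra.
From mathcomp Require Import complex reals.
From Stdlib Require Import FunctionalExtensionality.
Import GRing.Theory Num.Theory.
Local Open Scope ring_scope.

Section Masa.
Variable R : realType.
Variable B : algType R[i].
Variable star : B -> B.
Hypothesis Hinv : is_involution star.
Variable A : B -> Prop.
Hypothesis HA : is_masa star A.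

Lemma starM x y : star (x * y) = star y * star x.
Proof. by case: Hinv. Qed.
Lemma starK x : star (star x) = x.
Proof. by case: Hinv. Qed.
Lemma starD x y : star (x + y) = star x + star y.
Proof. by case: Hinv. Qed.
Lemma starZ (a : R[i]) x : star (a *: x) = (a^*)%C *: star x.
Proof. by case: Hinv. Qed.

Lemma conjN1 : ((-1 : R[i])^*)%C = -1.
Proof. apply/eqP; rewrite eq_complex /=; by rewrite ?oppr0 ?eqxx. Qed.
Lemma conji : (('i : R[i])^*)%C = - 'i%C.
Proof. apply/eqP; rewrite eq_complex /=; by rewrite ?oppr0 ?eqxx. Qed.
Lemma ii : ('i * 'i : R[i])%C = -1.
Proof. apply/eqP; rewrite eq_complex /=. by simpc. Qed.
Lemma two_neq0 : (2 : R[i]) != 0.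
Proof. apply/eqP=> /eqP; rewrite eq_complex /=. simpc. by rewrite andbT -mulr2n pnatr_eq0. Qed.

Lemma starN x : star (- x) = - star x.
Proof. by rewrite -scaleN1r starZ conjN1 scaleN1r. Qed.

Lemma comm_star x y : x * star y = star y * x -> star x * y = y * star x.
Proof. by move=> /(congr1 star); rewrite !starM starK => ->. Qed.

Inductive gen (h : B) : B -> Prop :=
| gA a : A a -> gen h a
| gH : gen h h
| gD x y : gen h x -> gen h y -> gen h (x + y)
| gZ (c : R[i]) x : gen h x -> gen h (c *: x)
| gM x y : gen h x -> gen h y -> gen h (x * y)
| gS x : gen h x -> gen h (star x).

Lemma gen_comm h (S : B -> Prop) :
  (forall s, S s -> S (star s)) ->
  (forall a s, A a -> S s -> a * s = s * a) ->
  (forall s, S s -> h * s = s * h) ->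
  forall y, gen h y -> forall s, S s -> y * s = s * y.
Proof.
move=> Sst HAS HhS y0; elim.
- by move=> a Aa s Ss; apply: HAS.
- exact: HhS.
- by move=> x y _ IHx _ IHy s Ss; rewrite mulrDl mulrDr IHx ?IHy.
- by move=> c x _ IH s Ss; rewrite -scalerAl -scalerAr IH.
- by move=> x y _ IHx _ IHy s Ss; rewrite -mulrA IHy // mulrA IHx // mulrA.
- move=> x _ IH s Ss; apply: comm_star; apply: IH; exact: Sst.
Qed.

Lemma selfadj_in (h : B) : star h = h -> (forall a, A a -> h * a = a * h) -> A h.
Proof.
move=> hs hA; move: HA; rewrite /is_masa /is_star_subalg => -[[A0 AD AZ AM AS] Aab Amax].
have C1 : forall y, gen h y -> forall s, (A s \/ s = h) -> y * s = s * y.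
  apply: gen_comm.
  - by move=> s [/AS|->]; [left|right].
  - by move=> a s Aa [As|->]; [apply: Aab|rewrite hA].
  - by move=> s [As|->]; [apply: hA|].
have C2 : forall y, gen h y -> forall s, gen h s -> y * s = s * y.
  apply: gen_comm.
  - by move=> s; apply: gS.
  - by move=> a s Aa gs; rewrite (C1 s gs a (or_introl Aa)).
  - by move=> s gs; rewrite (C1 s gs h (or_intror erefl)).
apply: (Amax (gen h)) => //; last exact: gH.
  rewrite /is_star_subalg; split; [by apply: gA|exact: gD|exact: gZ|exact: gM|exact: gS].
  by move=> x y gx gy; apply: C2.
exact: gA.
Qed.

Lemma comm_in (x : B) : (forall a, A a -> x * a = a * x) -> A x.
Proof.
move=> xA; move: HA; rewrite /is_masa /is_star_subalg => -[[A0 AD AZ AM AS] Aab Amax].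
have sA : forall a, A a -> star x * a = a * star x.
  by move=> a Aa; apply: comm_star; rewrite xA //; exact: AS.
set h := x + star x.
set g := 'i%C *: (x - star x).
have Ah : A h.
  apply: selfadj_in; first by rewrite /h starD starK addrC.
  by move=> a Aa; rewrite /h mulrDl mulrDr xA // sA.
have Ag : A g.
  apply: selfadj_in.
    by rewrite /g starZ starD starN starK conji scaleNr -scalerN opprB.
  move=> a Aa; rewrite /g -scalerAl -scalerAr; congr (_ *: _).
  by rewrite mulrBl mulrBr xA // sA.
have -> : x = 2^-1 *: (h + (-1) *: ('i%C *: g)).
  rewrite /h /g scaleN1r scalerA ii scaleN1r opprK addrACA subrr addr0 -mulr2n.
  rewrite -(scaler_nat 2 x) scalerA mulVf ?two_neq0 // scale1r.
by []. by apply AZ; apply AD => //; apply AZ; apply AZ.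
Qed.
End Masa.
Section Tens.
Variable R : realType.
Variable B : algType R[i].
Variable n : nat.
Variable psi : B -> 'M[B]_n.
Hypothesis padd : forall x y, psi (x + y) = psi x + psi y.
Hypothesis pmul : forall x y, psi (x * y) = psi x *m psi y.
Hypothesis pbij : bijective psi.

Lemma behead_cons k (s : 'I_n) (t : k.-tuple 'I_n) : behead_tuple [tuple of s :: t] = t.
Proof. exact: val_inj. Qed.

Lemma psi0 : psi 0 = 0.
Proof. by apply: (addrI (psi 0)); rewrite -padd !addr0. Qed.

Lemma big_tuple_cons k (F : (k.+1).-tuple 'I_n -> B) :
  \sum_(u : (k.+1).-tuple 'I_n) F u = \sum_(s : 'I_n) \sum_(t : k.-tuple 'I_n) F [tuple of s :: t].
Proof.
rewrite pair_big /=.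
rewrite (reindex (fun p : 'I_n * k.-tuple 'I_n => [tuple of p.1 :: p.2])) //=.
exists (fun u => (thead u, behead_tuple u)) => [[s t] _ | u _] /=.
  by rewrite theadE behead_cons.
by rewrite [RHS]tuple_eta.
Qed.

Lemma psi_itM k x y (r c : k.-tuple 'I_n) :
  psi_it _ _ _ psi k (x * y) r c = \sum_(t : k.-tuple 'I_n) psi_it _ _ _ psi k x r t * psi_it _ _ _ psi k y t c.
Proof.
elim: k x y r c => [|k IH] x y r c /=.
  rewrite (eq_bigr (fun _ => x * y)) // sumr_const card_tuple expn0 /=.
  by rewrite mulr1n.
rewrite IH (big_morph psi padd psi0) summxE big_tuple_cons exchange_big /=.
apply: eq_bigr => t _; rewrite pmul mxE; apply: eq_bigr => s _.
by rewrite !theadE !behead_cons.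
Qed.

Lemma psi_it_inj k x y : (forall r c, psi_it _ _ _ psi k x r c = psi_it _ _ _ psi k y r c) -> x = y.
Proof.
elim: k x y => [|k IH] x y H.
  exact: (H [tuple] [tuple]).
apply: IH => r c; case: pbij => g gK Kg.
rewrite -[LHS]gK -[RHS]gK; congr g; apply/matrixP => s t.
have := H [tuple of s :: r] [tuple of t :: c].
by rewrite /= !theadE !behead_cons.
Qed.

Lemma psi_it_surj k (Y : tens B n k) : exists d, forall r c, psi_it _ _ _ psi k d r c = Y r c.
Proof.
elim: k Y => [|k IH] Y.
  by exists (Y [tuple] [tuple]) => r c; rewrite (tuple0 r) (tuple0 c).
case: pbij => g gK Kg.
have [d Hd] := IH (fun r c => g (\matrix_(s, t) Y [tuple of s :: r] [tuple of t :: c])).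
exists d => r c /=; rewrite Hd Kg mxE.
by rewrite [in RHS](tuple_eta r) [in RHS](tuple_eta c).
Qed.
End Tens.

Theorem corollary3p3 (R : realType) (B : algType R[i]) (star : B -> B)
  (nrm : B -> R) (n : nat) (psi : B -> 'M[B]_n) (A : B -> Prop) (m : nat) :
  is_unital_Cstar star nrm ->
  is_star_iso_unital star psi ->
  (1 <= m)%N ->
  is_masa star A ->
  (forall b, sigma_image psi m A b -> A b) ->
  forall i j : 'I_n, forall b, chi_image psi m i j A b -> A b.
Proof.
move=> HC Hpsi Hm Hmasa Hsig i j b.
have Hinv : is_involution star by case: HC.
move: Hpsi; rewrite /is_star_iso_unital => -[[padd pscal] pmul pstar pbij p1].
have Hab : is_abelian A by move: Hmasa; rewrite /is_masa => -[].
case: m Hm Hsig => // k _ Hsig /= [a0 Aa0 Hb].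
apply: (@comm_in R B star Hinv A Hmasa) => c Ac.
have [d Hd] := @psi_it_surj R B n psi pbij k.+1 (lift_f (psi_it _ _ _ psi k c)).
have Hdf : psi_it _ _ _ psi k.+1 d = lift_f (psi_it _ _ _ psi k c).
  by apply: functional_extensionality => r; apply: functional_extensionality => t.
have Ad : A d by apply: Hsig; exists c.
have comm : d * a0 = a0 * d by apply: Hab.
apply: (@psi_it_inj R B n psi pbij k) => r t.
have L1 : psi_it _ _ _ psi k (b * c) r t = slice i j (psi_it _ _ _ psi k.+1 (a0 * d)) r t.
  rewrite (@psi_itM R B n psi padd pmul) /slice (@psi_itM R B n psi padd pmul) big_tuple_cons [in RHS](bigD1 j) //.
  rewrite [X in _ = _ + X]big1 ?addr0.
  - apply: eq_bigr => u _; rewrite Hb /slice Hdf /lift_f !theadE eqxx !behead_cons.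
    by rewrite /= !theadE !behead_cons.
  - move=> s /andP[_ /negbTE sj]; apply: big1 => u _.
    by rewrite Hdf /lift_f !theadE sj mulr0.
have L2 : psi_it _ _ _ psi k (c * b) r t = slice i j (psi_it _ _ _ psi k.+1 (d * a0)) r t.
  rewrite (@psi_itM R B n psi padd pmul) /slice (@psi_itM R B n psi padd pmul) big_tuple_cons [in RHS](bigD1 i) //.
  rewrite [X in _ = _ + X]big1 ?addr0.
  - apply: eq_bigr => u _; rewrite Hb /slice Hdf /lift_f !theadE eqxx !behead_cons.
    by rewrite /= !theadE !behead_cons.
  - move=> s /andP[_ /negbTE si]; apply: big1 => u _.
    by rewrite Hdf /lift_f !theadE eq_sym si mul0r.
by rewrite L1 L2 comm.
Qed.
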